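(* Consider the coordination game described in the context, in which each agent $i$ observes $x_i=\theta+\epsilon^x_i$ and $y_i=A+\epsilon^y_i$, where $(\epsilon^x_i,\epsilon^y_i)$ has joint density $f(\epsilon^x,\epsilon^y)$. Suppose that $\epsilon^y_i\in[-\sigma,\sigma]$, i.e. $f(\epsilon^x,\epsilon^y)=0$ for all $|\epsilon^y|>\sigma$ and all $\epsilon^x\in\mathbb{R}$, where $0<\sigma<\tfrac12$. Then there exists a continuum (an uncountable family) of distinct equilibria $A(\cdot)$.
   Context: A unit mass of agents $i\in[0,1]$ each choose $a_i\in\{0,1\}$ ($a_i=1$: attack the status quo). The aggregate attack is $A=\int_0^1 a_i\,di$. The status quo has strength $\theta\in\mathbb{R}$ and is abandoned iff $A\ge\theta$. An attacking agent pays cost $c\in(0,1)$ and gets $1$ if the status quo is abandoned (net $1-c$), otherwise net $-c$; not attacking yields $0$. Agents hold an (improper) uniform prior over $\theta$ on $\mathbb{R}$. Agent $i$ receives private signals $x_i=\theta+\epsilon^x_i$ and $y_i=A+\epsilon^y_i$, where the error pairs $(\epsilon^x_i,\epsilon^y_i)$ are independent across agents with joint density $f$; the structure is common knowledge. Given a conjectured (measurable) aggregate attack function $A:\mathbb{R}\to[0,1]$, the posterior of an agent with signals $(x,y)$ is $P[\theta\in S\mid x,y,A(\cdot)]=\int_S f(x-\theta,y-A(\theta))\,d\theta\big/\int_{\mathbb{R}} f(x-\theta,y-A(\theta))\,d\theta$ (equivalently, the limit as $N\to\infty$ of the posterior under a uniform prior on $[t-N,t+N]$). An agent attacks iff $P[A(\theta)\ge\theta\mid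 x,y,A(\cdot)]\ge c$. An equilibrium is a function $A:\mathbb{R}\to[0,1]$ such that for all $\theta\in\mathbb{R}$, $A(\theta)=\int_{\mathbb{R}^2}\chi\{(\epsilon^x,\epsilon^y): P[A(\theta')\ge\theta'\mid x=\theta+\epsilon^x,\,y=A(\theta)+\epsilon^y,\,A(\cdot)]\ge c\}\,f(\epsilon^x,\epsilon^y)\,d\epsilon^x d\epsilon^y$, where $\theta'$ denotes the random fundamental under the posterior and $\chi$ is the indicator function. *)

(* Defs.v *)
From HB Require Import structures.
From mathcomp Require Import all_boot all_order all_algebra.
From mathcomp Require Import all_classical all_reals all_analysis.
Set Implicit Arguments. Unset Strict Implicit. Unset Printing Implicit Defensive.
Import Order.TTheory GRing.Theory Num.Theory.
Local Open Scope classical_set_scope.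
Local Open Scope ring_scope.

Definition leb (R : realType) := (@lebesgue_measure R).
Definition leb2 (R : realType) := ((@lebesgue_measure R) \x (@lebesgue_measure R))%E.

Definition is_joint_density (R : realType) (f : R -> R -> R) : Prop :=
  (forall ex ey, 0 <= f ex ey) /\
  measurable_fun [set: R * R] (fun p : R * R => f p.1 p.2) /\
  (\int[@leb2 R]_(p in [set: R * R]) (f p.1 p.2)%:E = 1)%E.

(* Unnormalized posterior mass (improper uniform prior) of a set S of
   fundamentals for an agent with signals (x, y), given the conjectured
   aggregate attack function A. *)
Definition post_mass (R : realType) (f : R -> R -> R) (A : R -> R)
    (x y : R) (S : set R) : \bar R :=
  (\int[@leb R]_(t in S) (f (x - t) (y - A t))%:E)%E.

(* The agent attacks iff P[A(theta') >= theta' | x, y, A] >= c, where the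
   posterior probability is post_mass (success set) / post_mass (all of R).
   This is written multiplicatively (numerator >= c * denominator), which
   coincides with the ratio condition whenever the denominator is in (0,+oo). *)
Definition attacks (R : realType) (f : R -> R -> R) (c : R) (A : R -> R)
    (x y : R) : Prop :=
  (c%:E * post_mass f A x y [set: R] <= post_mass f A x y [set t | (t <= A t)%R])%E.

Definition equilibrium (R : realType) (f : R -> R -> R) (c : R) (A : R -> R)
    : Prop :=
  measurable_fun [set: R] A /\
  (forall t, 0 <= A t <= 1) /\
  (forall t,
    (\int[@leb2 R]_(e in [set: R * R])
        ((\1_[set e : R * R | attacks f c A (t + e.1) (A t + e.2)] e)
          * f e.1 e.2)%:E)%E
    = (A t)%:E).

(* Main.v *)
Require Import Defs.
From HB Require Import structures.
From mathcomp Require Import all_boot all_order all_algebra.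
From mathcomp Require Import all_classical all_reals all_analysis.
From mathcomp Require Import measurable_realfun.
From mathcomp Require Import ring lra.
Import Order.TTheory GRing.Theory Num.Theory.
Local Open Scope classical_set_scope.
Local Open Scope ring_scope.

Section refl.
Context (R : realType) (a : R).
Definition reflf (t : R) : R := a - t.
Lemma mreflf : measurable_fun setT reflf.
Proof. by apply: measurable_funB => //; exact: measurable_cst. Qed.
Lemma mreflf' : measurable_fun (T:=measurableTypeR R) (U:=measurableTypeR R) setT reflf.
Proof. exact: mreflf. Qed.
Definition reflm : set (measurableTypeR R) -> \bar R :=
  fun A => lebesgue_measure (reflf @^-1` A).
Let reflm0 : reflm set0 = 0%E.
Proof. by rewrite /reflm preimage_set0 measure0. Qed.
Let reflm_ge0 A : (0 <= reflm A)%E.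
Proof. by rewrite /reflm; exact: measure_ge0. Qed.
Let reflm_sa : semi_sigma_additive reflm.
Proof.
move=> F mF tF mUF; rewrite /reflm preimage_bigcup.
apply: measure_semi_sigma_additive.
- by move=> n; rewrite -[X in measurable X]setTI; exact: mreflf'.
- apply/trivIsetP => /= i j _ _ ij; rewrite -preimage_setI.
  by move/trivIsetP : tF => /(_ _ _ _ _ ij) ->//; rewrite preimage_set0.
- by rewrite -preimage_bigcup -[X in measurable X]setTI; exact: mreflf'.
Qed.
HB.instance Definition _ := isMeasure.Build _ _ _ reflm reflm0 reflm_ge0 reflm_sa.

Lemma reflmE (A : set (measurableTypeR R)) : measurable A -> lebesgue_measure A = reflm A.
Proof.
move=> mA; have := (@lebesgue_measure_unique R reflm). move=> H; apply: H mA => X [[x y] _ <-].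
rewrite /=; rewrite /reflm.
have -> : reflf @^-1` `]x, y]%classic = `[a - y, a - x[%classic.
  apply/seteqP; split => t; rewrite /reflf /= !in_itv /=.
    by move=> /andP[h1 h2]; apply/andP; split; lra.
  by move=> /andP[h1 h2]; apply/andP; split; lra.
rewrite !lebesgue_measure_itv /= !lte_fin.
have [h|h] := ltP x y.
  rewrite ifT; last lra.
  by rewrite -EFinD; congr (_%:E); lra.
by rewrite ifF //; apply/negbTE; rewrite -leNgt; lra.
Qed.

Lemma integral_refl (h : R -> \bar R) : measurable_fun setT h -> (forall x, (0 <= h x)%E) ->
  (\int[@lebesgue_measure R]_(t in setT) h (a - t)%R = \int[@lebesgue_measure R]_(u in setT) h u)%E.
Proof.
move=> mh h0.
rewrite [RHS](eq_measure_integral reflm); last by move=> B mB _; exact: reflmE.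
rewrite (@ge0_integral_pushforward _ _ (measurableTypeR R) (measurableTypeR R) R reflf mreflf' (@lebesgue_measure R) setT h measurableT) //.

Qed.
End refl.

Section core.
Context (R : realType).
Notation mu := (@lebesgue_measure R).

Lemma mset_lt d (T : measurableType d) (f g : T -> R) :
  measurable_fun setT f -> measurable_fun setT g -> measurable [set x | f x < g x].
Proof.
move=> mf mg.
have := measurable_fun_ltr mf mg measurableT (Y:=[set true]) I.
by rewrite setTI; congr measurable; apply/seteqP; split => x /=.
Qed.

Lemma mset_le d (T : measurableType d) (f g : T -> R) :
  measurable_fun setT f -> measurable_fun setT g -> measurable [set x | f x <= g x].
Proof.
move=> mf mg.
have := measurable_fun_ler mf mg measurableT (Y:=[set true]) I.
by rewrite setTI; congr measurable; apply/seteqP; split => x /=.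
Qed.


Lemma core1 (g : R -> R) (S : set R) (dl : R) : 0 < dl -> (forall x, 0 <= g x) ->
  measurable_fun setT g -> measurable S ->
  (forall x y, y <= x -> S x -> S y) ->
  (forall x, S x -> (\int[mu]_u (\1_[set u | u < x + dl] u * g u)%:E = 0)%E) ->
  (\int[mu]_x (\1_S x * g x)%:E = 0)%E.
Proof.
move=> dl0 g0 mg mS Sdown hS.
pose L := [set p : R * R | p.2 - dl < p.1].
pose M := [set p : R * R | p.1 <= p.2].
have mL : measurable L.
  apply: mset_lt; last exact: measurable_fst.
  by apply: measurable_funB => //; exact: measurable_snd.
have mM : measurable M by apply: mset_le; [exact: measurable_fst | exact: measurable_snd].
pose F := fun p : R * R => (\1_S p.1 * \1_L p * \1_M p * g p.2)%:E.
have mF : measurable_fun setT F.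
  apply/measurable_EFinP; apply: measurable_funM; last exact: measurableT_comp.
  apply: measurable_funM; last exact: measurable_indic.
  apply: measurable_funM; last exact: measurable_indic.
  by apply: measurableT_comp; [exact: measurable_indic|exact: measurable_fst].
have F0 : forall p, (0 <= F p)%E.
  by move=> p; rewrite lee_fin !mulr_ge0 //; apply: indicator_ge0 || exact: g0.
have FT := fubini_tonelli (m1:=mu) (m2:=mu) F mF F0.
have LHS0 : (\int[mu]_x \int[mu]_u F (x, u) = 0)%E.
  apply: integral0_eq => x _.
  have [Sx|nSx] := pselect (S x); last first.
    by apply: integral0_eq => u _; rewrite /F /= indicE memNset // mul0r !mul0r.
  apply/eqP; rewrite eq_le; apply/andP; split; last first.
    by apply: integral_ge0 => u _; exact: F0.
  rewrite -(hS x Sx); apply: ge0_le_integral => //.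
  - by apply: measurableT_comp mF _; apply: measurable_fun_pair => //; exact: measurable_cst.
  - apply/measurable_EFinP; apply: measurable_funM => //; apply: measurable_indic.
    by apply: mset_lt => //; apply: measurable_funD => //; exact: measurable_cst.
  move=> u _; rewrite /F /= lee_fin ler_wpM2r //.
  rewrite !indicE.
  have [hu|hu] := pselect (u < x + dl).
    rewrite (mem_set (hu : [set u | u < x + dl] u)).
    by case: (x \in S); case: ((x, u) \in L); case: ((x, u) \in M); rewrite /= ?mulr0 ?mul0r ?mulr1 ?ler01 ?lexx.
  rewrite (memNset (hu : ~ [set u | u < x + dl] u)).
  rewrite (memNset (_ : ~ L (x, u))) ?mulr0 ?mul0r //.
  by rewrite /L /= => h; apply: hu; lra.
have mFu : forall u, measurable_fun setT (fun x => F (x, u)).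
  move=> u; apply: measurableT_comp mF _.
  by apply: measurable_fun_pair => //; exact: measurable_cst.
have low : forall u, ((\1_S u * g u)%:E * dl%:E <= \int[mu]_x F (x, u))%E.
  move=> u.
  have [Su|nSu] := pselect (S u); last first.
    rewrite indicE memNset // mul0r mul0e; apply: integral_ge0 => x _; exact: F0.
  rewrite indicE mem_set // mul1r.
  have mI : measurable (`]u - dl, u]%classic : set R) by exact: measurable_itv.
  apply: (@le_trans _ _ (\int[mu]_x ((g u)%:E * (\1_(`](u - dl)%R, u]%classic) x)%:E))%E).
    rewrite ge0_integralZl //.
    - rewrite integral_indic // setIT.
      have H : (@lebesgue_measure R `](u - dl)%R, u]%classic = dl%:E)%E.
        rewrite lebesgue_measure_itv /= lte_fin ifT; last lra.
        by rewrite -EFinD; congr EFin; ring.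
      rewrite le_eqVlt; apply/orP; left; apply/eqP; congr (_ * _)%E; apply/esym; exact: H.
    - by apply/measurable_EFinP; exact: measurable_indic.
    - by rewrite lee_fin.
  apply: ge0_le_integral => //.
  - by move=> x _; rewrite -EFinM lee_fin mulr_ge0.
  - by apply: measurable_funeM; apply/measurable_EFinP; exact: measurable_indic.
  - exact: mFu.
  move=> x _; rewrite /F /= -EFinM lee_fin.
  have [hx|hx] := pselect ((`](u - dl)%R, u]%classic : set R) x); last first.
    by rewrite indicE memNset // mulr0 !mulr_ge0.
  rewrite indicE mem_set // mulr1.
  move: hx; rewrite /= in_itv /= => /andP[h1 h2].
  by rewrite !indicE !mem_set ?mul1r //; exact: (Sdown u x h2 Su).
have mFG : measurable_fun setT (fun u => \int[mu]_x F (x, u))%E.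
  exact: (measurable_fun_fubini_tonelli_G (m1:=mu) F mF F0).
have mSg : measurable_fun setT (fun u => (\1_S u * g u)%:E).
  by apply/measurable_EFinP; apply: measurable_funM => //; exact: measurable_indic.
have Sg0 : forall u, (0 <= (\1_S u * g u)%:E)%E by move=> u; rewrite lee_fin mulr_ge0.
have : (\int[mu]_u ((\1_S u * g u)%:E * dl%:E) <= 0)%E.
  rewrite -LHS0 FT; apply: ge0_le_integral => //.
  - by move=> u _; apply: mule_ge0; rewrite lee_fin ?mulr_ge0 // ltW.
  - by apply: emeasurable_funM => //; exact: measurable_cst.
rewrite ge0_integralZr //; last by rewrite lee_fin ltW.
move=> hle; apply/eqP; rewrite eq_le; apply/andP; split; last first.
  by apply: integral_ge0 => u _; exact: Sg0.
rewrite leNgt; apply/negP => Qpos.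
have : (0 < (\int[mu]_x (\1_S x * g x)%:E) * dl%:E)%E.
  by apply: mule_gt0 => //; rewrite lte_fin.
by rewrite ltNge hle.
Qed.
End core.

Lemma indic_T (R : realType) T (X : set T) x : X x -> \1_X x = 1 :> R.
Proof. by move=> h; rewrite indicE mem_set. Qed.
Lemma indic_F (R : realType) T (X : set T) x : ~ X x -> \1_X x = 0 :> R.
Proof. by move=> h; rewrite indicE memNset. Qed.
Lemma indic_iff (R : realType) T (X Y : set T) x : (X x <-> Y x) -> \1_X x = \1_Y x :> R.
Proof.
move=> [h1 h2]; have [hx|hx] := pselect (X x).
  by rewrite !indic_T //; exact: h1.
by rewrite !indic_F // => /h2.
Qed.

Lemma arith1 (R : realType) (sigma z : R) : sigma < 1/2 -> -sigma <= z -> sigma < 1 + z.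
Proof. move=> h1 h2; lra. Qed.

Lemma arith2 (R : realType) (sigma z : R) : sigma < 1/2 -> z <= sigma -> sigma < - (0 + z - 1).
Proof. move=> h1 h2; lra. Qed.
Lemma arith3 (R : realType) (th e1 s t : R) : t <= s -> ~ (th + e1 - t < e1 + (th - s)).
Proof. move=> h1 h2; lra. Qed.
Lemma arith4 (R : realType) (th e1 s t : R) : s < t -> th + e1 - t < e1 + (th - s).
Proof. move=> h1; lra. Qed.

Section main.
Context (R : realType) (c sigma : R) (f : R -> R -> R).
Hypotheses (hc : 0 < c < 1) (hf0 : forall ex ey, 0 <= f ex ey)
  (mf : measurable_fun setT (fun p : R * R => f p.1 p.2))
  (hsig : 0 < sigma < 1 / 2)
  (hsupp : forall ex ey, sigma < `|ey| -> f ex ey = 0)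
  (hint : (\int[@leb2 R]_(p in [set: R * R]) (f p.1 p.2)%:E = 1)%E).

Lemma fsupp ex ey : f ex ey != 0 -> `|ey| <= sigma.
Proof. by move=> h; rewrite leNgt; apply/negP => /(hsupp ex) /eqP; apply/negP. Qed.

Lemma mf2 y : measurable_fun setT (fun x => f x y).
Proof.
exact: (measurable_fun_pair1 y mf).
Qed.

Variable s : R.
Hypothesis hs : 0 < s < 1.
Definition As (t : R) : R := ((t <= s)%R)%:R.

Lemma As_le t : t <= s -> As t = 1. Proof. by move=> h; rewrite /As h. Qed.
Lemma As_gt t : s < t -> As t = 0. Proof. by move=> h; rewrite /As leNgt h. Qed.


Lemma high_attack th e : th <= s -> f e.1 e.2 != 0 ->
  attacks f c As (th + e.1) (As th + e.2).
Proof.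
have /andP[hs0 hs1] := hs; have /andP[hsig0 hsig1] := hsig.
move=> hth fe; have he := fsupp _ _ fe; rewrite /attacks As_le //.
set x := th + e.1; set y := 1 + e.2.
have he' : - sigma <= e.2 by move: he; rewrite ler_norml => /andP[].
have k0 : forall t, ~ (t <= As t) -> f (x - t) (y - As t) = 0.
  move=> t ht; have hts : s < t.
    rewrite ltNge; apply/negP => h; apply: ht; rewrite As_le //; exact: le_trans h (ltW hs1).
  rewrite As_gt // subr0; apply: hsupp; apply: (lt_le_trans _ (ler_norm _)).
  exact: arith1 hsig1 he'.
have eqD : post_mass f As x y [set: R] = post_mass f As x y [set t : R | (t <= As t)%R].
  rewrite /post_mass [RHS]integral_mkcond; apply: eq_integral => t _.
  rewrite patchE.
  have [ht|ht] := pselect (t <= As t); first by rewrite mem_set.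
  by rewrite memNset // k0.
rewrite -eqD; apply: gee_pMl => //.
- by apply: integral_ge0 => t _; rewrite lee_fin.
- by rewrite lee_fin; case/andP: hc => _ /ltW.
Qed.

Lemma high_int th : th <= s ->
  (\int[@leb2 R]_(e in [set: R * R])
    ((\1_[set e : R * R | attacks f c As (th + e.1) (As th + e.2)] e * f e.1 e.2)%:E)
   = (As th)%:E)%E.
Proof.
move=> hth; rewrite As_le // -hint; apply: eq_integral => e _; congr EFin.
have [fe|fe] := eqVneq (f e.1 e.2) 0; first by rewrite fe !mulr0.
by rewrite indic_T ?mul1r //; have := high_attack th e hth fe; rewrite As_le.
Qed.

Definition Wd (dl : R) := [set q : (R * R) * R | q.2 < q.1.1 + dl].
Definition Gf dl (q : (R * R) * R) : \bar R := (\1_(Wd dl) q * f q.2 q.1.2)%:E.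
Definition Pf dl (e : R * R) : \bar R := (\int[@lebesgue_measure R]_u Gf dl (e, u))%E.

Lemma mG dl : measurable_fun setT (Gf dl).
Proof.
apply/measurable_EFinP; apply: measurable_funM.
  apply: measurable_indic; apply: mset_lt; first exact: measurable_snd.
  apply: measurable_funD => //.
  exact: (measurableT_comp measurable_fst measurable_fst).
have mp : measurable_fun setT (fun q : (R * R) * R => (q.2, q.1.2)).
  apply: measurable_fun_pair; first exact: measurable_snd.
  exact: (measurableT_comp measurable_snd measurable_fst).
exact: (measurableT_comp mf mp).
Qed.

Lemma G0 dl q : (0 <= Gf dl q)%E.
Proof. by rewrite lee_fin mulr_ge0. Qed.

Lemma Pf_ge0 dl e : (0 <= Pf dl e)%E.
Proof. by apply: integral_ge0 => u _; exact: G0. Qed.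

Lemma low_key th e : s < th -> f e.1 e.2 != 0 ->
  (attacks f c As (th + e.1) (As th + e.2) <-> Pf (th - s) e = 0%E).
Proof.
have /andP[hs0 hs1] := hs; have /andP[hsig0 hsig1] := hsig.
have /andP[hc0 hc1] := hc.
move=> hth fe; have he := fsupp _ _ fe.
have he' : e.2 <= sigma by move: he; rewrite ler_norml => /andP[].
rewrite /attacks As_gt //.
have k1 : forall t, t <= s -> f (th + e.1 - t) (0 + e.2 - As t) = 0.
  move=> t hts; rewrite As_le //; apply: hsupp.
  rewrite -normrN; apply: (lt_le_trans _ (ler_norm _)); exact: arith2.
have N0 : post_mass f As (th + e.1) (0 + e.2) [set t | t <= As t] = 0%E.
  apply: integral0_eq => t /= ht.
  have [hts|hts] := leP t s; first by rewrite k1.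
  by exfalso; move: ht; rewrite As_gt // => ht; move: (lt_le_trans hs0 (ltW (lt_le_trans hts ht))); rewrite ltxx.
have D : post_mass f As (th + e.1) (0 + e.2) [set: R] = Pf (th - s) e.
  rewrite /post_mass /Pf.
  transitivity (\int[@lebesgue_measure R]_(t in setT) (Gf (th - s) (e, (th + e.1 - t)%R)))%E.
    apply: eq_integral => t _; rewrite /Gf /=; congr EFin.
    have [hts|hts] := leP t s.
      by rewrite k1 // indic_F ?mul0r //; exact: arith3.
    by rewrite As_gt // subr0 add0r indic_T ?mul1r //; exact: arith4.
  apply: (@integral_refl R (th + e.1) (fun u => Gf (th - s) (e, u))).
  - exact: (measurable_fun_pair2 e (mG (th - s))).
  - by move=> u; exact: G0.
rewrite N0 D; split.
  move=> h; apply/eqP; rewrite eq_le Pf_ge0 andbT.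
  by move: h; rewrite pmule_rle0 // lte_fin.
by move=> ->; rewrite mule0.
Qed.

Lemma Pf_mono dl y a b : a <= b -> (Pf dl (a, y) <= Pf dl (b, y))%E.
Proof.
move=> hab; apply: ge0_le_integral => //.
- by move=> u _; exact: G0.
- exact: (measurable_fun_pair2 (a, y) (mG dl)).
- exact: (measurable_fun_pair2 (b, y) (mG dl)).
move=> u _; rewrite /Gf lee_fin ler_wpM2r //.
have [h|h] := pselect (Wd dl ((a, y), u)).
  rewrite !indic_T //; rewrite /Wd /= in h *; exact: (lt_le_trans h (lerD2r _ _ _ hab)) || lra.
by rewrite indic_F // indicE ler0n.
Qed.

Lemma low_int th : s < th ->
  (\int[@leb2 R]_(e in [set: R * R])
    ((\1_[set e : R * R | attacks f c As (th + e.1) (As th + e.2)] e * f e.1 e.2)%:E)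
   = (As th)%:E)%E.
Proof.
move=> hth; rewrite (As_gt th hth).
pose Z := [set e : R * R | Pf (th - s) e = 0%E].
have mP : measurable_fun setT (Pf (th - s)).
  exact: (measurable_fun_fubini_tonelli_F (m2:=@lebesgue_measure R) (Gf (th - s)) (mG _) (G0 _)).
have mZ : measurable Z.
  have := mP measurableT [set 0%E] (emeasurable_set1 _).
  by rewrite setTI.
transitivity (\int[@leb2 R]_(e in [set: R * R]) (\1_Z e * f e.1 e.2)%:E)%E.
  apply: eq_integral => e _; congr EFin; have [fe|fe] := eqVneq (f e.1 e.2) 0; first by rewrite fe !mulr0.
  congr (_ * _); apply: indic_iff; have := low_key th e hth fe; by rewrite As_gt.
have mH : measurable_fun setT (fun e : R * R => (\1_Z e * f e.1 e.2)%:E).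
  by apply/measurable_EFinP; apply: measurable_funM => //; exact: measurable_indic.
have H0 : forall e : R * R, (0 <= (\1_Z e * f e.1 e.2)%:E)%E.
  by move=> e; rewrite lee_fin mulr_ge0.
have FT := fubini_tonelli2 (m1:=@lebesgue_measure R) (m2:=@lebesgue_measure R) _ mH H0.
rewrite /leb2; apply: (eq_trans FT).
apply: integral0_eq => y _; rewrite /fubini_G /=.
transitivity (\int[@lebesgue_measure R]_x (\1_[set x | Z (x, y)] x * f x y)%:E)%E.
  by apply: eq_integral => x _; congr EFin; congr (_ * _); apply: indic_iff.
apply: (@core1 R _ _ (th - s)).
- by rewrite subr_gt0.
- by move=> x; exact: hf0.
- exact: mf2.
- have := measurable_ysection y mZ; congr measurable.
  by apply/seteqP; split => x /=; rewrite /ysection /= ?inE => h //; move: h; rewrite inE.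
- move=> a b hba /= hZa; apply/eqP; rewrite eq_le Pf_ge0 andbT -hZa.
  exact: Pf_mono.
- move=> x /= hx; rewrite -[RHS]hx; apply: eq_integral => u _; rewrite /Gf; congr EFin.
Qed.

End main.

Lemma sg01 (R : realType) (r : R) : 0 < (1 + expR r)^-1 < 1.
Proof.
have he := expR_gt0 r.
apply/andP; split; first by rewrite invr_gt0; lra.
rewrite invf_lt1; lra.
Qed.

Theorem proposition1 (R : realType) (c sigma : R) (f : R -> R -> R) :
  0 < c < 1 ->
  is_joint_density f ->
  0 < sigma < 1 / 2 ->
  (forall ex ey, sigma < `|ey| -> f ex ey = 0) ->
  exists E : R -> (R -> R),
    injective E /\ (forall s, equilibrium f c (E s)).
Proof.
move=> hc [hf0 [mf hint]] hsig hsupp.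
pose sg (r : R) : R := (1 + expR r)^-1.
exists (fun r => As R (sg r)); split.
  have key : forall a b, As R (sg a) = As R (sg b) -> sg a <= sg b.
    move=> a b /(congr1 (fun F => F (sg a))); rewrite /As lexx /=.
    case: (sg a <= sg b) => //= /eqP; rewrite oner_eq0; exact: id.
  move=> a b hab.
  have : sg a = sg b by apply/eqP; rewrite eq_le !key.
  rewrite /sg => /invr_inj /addrI; exact: expR_inj.
move=> r; have hs := @sg01 R r.
split; last split.
- have -> : As R (sg r) = \1_[set t : R | t <= sg r].
    apply/funext => t; rewrite /As indicE.
    case: (boolP (t <= sg r)) => h; first by rewrite mem_set.
    by rewrite memNset // => /= h'; move: h; rewrite h'.
  apply: measurable_indic; apply: mset_le; first exact: measurable_id.
  exact: measurable_cst.
- by move=> t; rewrite /As; case: (t <= sg r); rewrite /= ?lexx ?ler01.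
- move=> t; have [h|h] := leP t (sg r).
    exact: (high_int _ _ _ _ hc hf0 hsig hsupp hint _ hs _ h).
  exact: (low_int _ _ _ _ hc hf0 mf hsig hsupp _ hs _ h).
Qed.
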